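(* Let $E$ be a reflexive Banach space with $E = V \oplus W$ ($V, W$ linear subspaces, $\dim V < +\infty$), and let $\Phi\colon E \to \mathbb{R}$ be locally Lipschitz and satisfy: (i) $\Phi(w) \to +\infty$ as $\|w\| \to \infty$, $w \in W$; (ii$''$) for every $w \in W$, the map $v \mapsto \Phi(v+w)$ is strictly quasi-concave on $V$; (iii) $\Phi(v+w) \to -\infty$ as $\|v\| \to +\infty$ ($v \in V$), uniformly for $w$ in bounded subsets of $W$; (iv) for every $v \in V$, the map $w \mapsto \Phi(v+w)$ is weakly lower semi-continuous on $W$. Then, writing $s(w)$ for the unique maximizer of $v\mapsto\Phi(v+w)$ on $V$, there is $\overline{w}\in W$ minimizing $w\mapsto\max_{v\in V}\Phi(v+w)$ such that $\overline{u} = s(\overline{w}) + \overline{w}$ is a critical point of $\Phi$ (i.e. $0 \in \partial\Phi(\overline{u})$) and $$\Phi(\overline{u}) = \min_{w \in W} \max_{v \in V} \Phi(v+w).$$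
   Context: A function $f\colon V\to\mathbb{R}$ is strictly quasi-concave if $f(tx+(1-t)y) > \min\{f(x),f(y)\}$ for all $x \neq y$ in $V$ and $t \in (0,1)$. For a locally Lipschitz $\Phi$, $\Phi^\circ(x;v) = \limsup_{y \to x,\, t \downarrow 0} \frac{\Phi(y+tv) - \Phi(y)}{t}$ and the Clarke subdifferential is $\partial\Phi(x) = \{x^* \in E^* : \Phi^\circ(x;v) \ge \langle x^*, v\rangle \ \forall v \in E\}$; $x$ is a critical point if $0 \in \partial\Phi(x)$. *)

(* Defs.v *)
From HB Require Import structures.
From mathcomp Require Import all_boot all_order all_algebra.
From mathcomp Require Import all_classical all_reals all_analysis.
Set Implicit Arguments. Unset Strict Implicit. Unset Printing Implicit Defensive.
Import Order.TTheory GRing.Theory Num.Theory.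
Import numFieldNormedType.Exports.
Local Open Scope classical_set_scope.
Local Open Scope ring_scope.

Section Defs.
Context {R : realType} {E : normedModType R}.

Definition dual_elt (f : E -> R) : Prop :=
  (forall x y, f (x + y) = f x + f y) /\
  (forall (a : R) x, f (a *: x) = a * f x) /\
  continuous f.

(* Reflexivity: every bounded linear functional on E^* (bounded w.r.t. the
   dual norm, i.e. |L f| <= C * M whenever |f x| <= M ||x|| for all x) is
   evaluation at some point of E. *)
Definition reflexive_space : Prop :=
  forall L : (E -> R) -> R,
    (forall f g, dual_elt f -> dual_elt g -> L (fun x => f x + g x) = L f + L g) ->
    (forall (a : R) f, dual_elt f -> L (fun x => a * f x) = a * L f) ->
    (exists C : R, forall f, dual_elt f -> forall M : R, 0 <= M ->
        (forall x, `|f x| <= M * `|x|) -> `|L f| <= C * M) ->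
    exists x0 : E, forall f, dual_elt f -> L f = f x0.

Definition lin_subspace (A : set E) : Prop :=
  A 0 /\ (forall x y, A x -> A y -> A (x + y)) /\
  (forall (a : R) x, A x -> A (a *: x)).

Definition finite_dim (A : set E) : Prop :=
  exists (n : nat) (e : 'I_n -> E), forall x, A x ->
    exists c : 'I_n -> R, x = \sum_(i < n) c i *: e i.

Definition direct_sum (V W : set E) : Prop :=
  forall x : E, exists! p : E * E, V p.1 /\ W p.2 /\ x = p.1 + p.2.

Definition locally_lipschitz (Phi : E -> R) : Prop :=
  forall x : E, exists r : R, 0 < r /\ exists L : R, forall y z : E,
    `|y - x| < r -> `|z - x| < r -> `|Phi y - Phi z| <= L * `|y - z|.

Definition strictly_quasi_concave_on (V : set E) (f : E -> R) : Prop :=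
  forall x y : E, V x -> V y -> x <> y -> forall t : R, 0 < t -> t < 1 ->
    Num.min (f x) (f y) < f (t *: x + (1 - t) *: y).

(* lower semicontinuity of g on W for the weak topology sigma(E, E^* ):
   at each w0 in W and each c < g w0 there is a weak neighbourhood
   {w : |f_i (w - w0)| < eps, i < n} (f_i in E^* ) on which g > c (within W). *)
Definition weakly_lsc_on (W : set E) (g : E -> R) : Prop :=
  forall w0 : E, W w0 -> forall c : R, c < g w0 ->
    exists (n : nat) (fs : 'I_n -> E -> R) (eps : R),
      (forall i, dual_elt (fs i)) /\ 0 < eps /\
      forall w : E, W w -> (forall i, `|fs i (w - w0)| < eps) -> c < g w.

(* Clarke generalized directional derivative:
   limsup_{y -> x, t \downarrow 0} (Phi (y + t v) - Phi y) / t
   = inf_{delta > 0} sup { quotient : |y - x| < delta, 0 < t < delta }. *)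
Definition clarke_dd (Phi : E -> R) (x v : E) : \bar R :=
  ereal_inf [set ereal_sup [set q : \bar R | exists (y : E) (t : R),
                  `|y - x| < delta /\ 0 < t /\ t < delta /\
                  q = ((Phi (y + t *: v) - Phi y) / t)%:E]
            | delta in [set d : R | 0 < d]].

Definition clarke_subdiff (Phi : E -> R) (x : E) : set (E -> R) :=
  [set xs | dual_elt xs /\ forall v : E, ((xs v)%:E <= clarke_dd Phi x v)%E].

Definition critical_point (Phi : E -> R) (x : E) : Prop :=
  clarke_subdiff Phi x (fun _ => 0).

End Defs.

(* Main.v *)
From HB Require Import structures.
From mathcomp Require Import all_boot all_order all_algebra.
From mathcomp Require Import all_classical all_reals all_analysis.
Require Import Defs.
From mathcomp Require Import ring lra.
Set Implicit Arguments. Unset Strict Implicit. Unset Printing Implicit Defensive.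
Import Order.TTheory GRing.Theory Num.Theory.
Import numFieldNormedType.Exports.
Local Open Scope classical_set_scope.
Local Open Scope ring_scope.

Section S.
Context {R : realType} {E : normedModType R}.

Lemma nbhsE' (x : E) (P : set E) :
  nbhs x P <-> exists2 e : R, 0 < e & forall y, `|x - y| < e -> P y.
Proof.
rewrite -nbhs_nbhs_norm; split => [[e e0 H]|[e e0 H]]; exists e => //.
Qed.

Lemma closureP' (A : set E) p :
  closure A p <-> forall e : R, 0 < e -> exists a, A a /\ `|p - a| < e.
Proof.
split => [H e e0|H B /nbhsE' [e e0 He]].
  have [a [Aa Ba]] := H _ (nbhsx_ballx p e e0).
  by exists a; split => //; rewrite -ball_normE in Ba.
by have [a [Aa Ha]] := H e e0; exists a; split => //; apply: He.
Qed.

Lemma closedP' (A : set E) :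
  (forall p, (forall e : R, 0 < e -> exists a, A a /\ `|p - a| < e) -> A p) ->
  closed A.
Proof. by move=> H p /closureP'; apply: H. Qed.


Lemma ll_cont (Phi : E -> R) : locally_lipschitz Phi -> continuous Phi.
Proof.
move=> LL x; have [r [r0 [L HL]]] := LL x.
apply/cvgrPdist_lt => eps eps0.
have k0 : 0 < `|L| + 1 by rewrite ltr_wpDl ?normr_ge0.
apply/nbhsE'; exists (Num.min r (eps / (`|L| + 1))).
  by rewrite lt_min r0 /= divr_gt0.
move=> y; rewrite lt_min => /andP[yr ye].
have := HL x y; rewrite subrr normr0 => /(_ r0); rewrite distrC => /(_ yr) h.
apply: le_lt_trans h _.
move: ye; rewrite ltr_pdivlMr // => ye.
have := ler_norm L; have := normr_ge0 (x - y); have := normr_ge0 L.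
move: ye; set a := `|x - y|; set k := `|L|; nra.
Qed.


Lemma lin_sub (f : E -> R) : (forall x y, f (x + y) = f x + f y) ->
  (forall (a : R) x, f (a *: x) = a * f x) -> forall x y, f (x - y) = f x - f y.
Proof.
by move=> fa fh x y; rewrite -scaleN1r fa fh mulN1r.
Qed.

Lemma lin0 (f : E -> R) : (forall (a : R) x, f (a *: x) = a * f x) -> f 0 = 0.
Proof. by move=> fh; rewrite -(scale0r (0:E)) fh mul0r. Qed.

Lemma bounded_lin_cont (f : E -> R) : (forall x y, f (x + y) = f x + f y) ->
  (forall (a : R) x, f (a *: x) = a * f x) ->
  (exists C : R, forall x, `|f x| <= C * `|x|) -> continuous f.
Proof.
move=> fa fh [C HC] x.
apply/cvgrPdist_lt => eps eps0.
have k0 : 0 < `|C| + 1 by rewrite ltr_wpDl ?normr_ge0.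
apply/nbhsE'; exists (eps / (`|C| + 1)); first by rewrite divr_gt0.
move=> y ye; rewrite -lin_sub //.
apply: le_lt_trans (HC _) _.
move: ye; rewrite ltr_pdivlMr // => ye.
have := ler_norm C; have := normr_ge0 (x - y); have := normr_ge0 C.
move: ye; set a := `|x - y|; set k := `|C|; nra.
Qed.

Lemma dual_bounded (f : E -> R) : dual_elt f ->
  exists C : R, 0 < C /\ forall x, `|f x| <= C * `|x|.
Proof.
move=> [fa [fh fc]].
have f0 := lin0 fh.
have := fc 0; move/cvgrPdist_lt => /(_ 1 ltr01) /nbhsE' [d d0 Hd].
exists (2 / d); split; first by rewrite divr_gt0.
move=> x; have [->|xn0] := eqVneq x 0; first by rewrite f0 !normr0 mulr0.
have nx0 : 0 < `|x| by rewrite normr_gt0.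
have a0 : 0 < d / (2 * `|x|) by rewrite divr_gt0 // mulr_gt0.
have h := Hd ((d / (2 * `|x|)) *: x).
have e1 : `|0 - (d / (2 * `|x|)) *: x| = d / 2.
  by rewrite sub0r normrN normrZ gtr0_norm //; field; rewrite gt_eqF.
have e2 : `|f 0 - f ((d / (2 * `|x|)) *: x)| = d / (2 * `|x|) * `|f x|.
  by rewrite f0 sub0r normrN fh normrM gtr0_norm.
rewrite e1 e2 in h.
have d2 : d / 2 < d by rewrite ltr_pdivrMr // ltr_pMr // ltr1n.
have h2 := h d2.
have ab : d / (2 * `|x|) * (2 * `|x|) = d by field; rewrite gt_eqF.
have h3 : d * `|f x| < 2 * `|x|.
  move: h2 ab a0 nx0 d0; set a := d / (2 * `|x|); set b := `|x|; set c := `|f x|; nra.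
have -> : 2 / d * `|x| = 2 * `|x| / d by rewrite mulrAC.
rewrite ler_pdivlMr //; move: h3; set c := `|f x|; lra.
Qed.


Lemma cont_sum (T : topologicalType) (I : Type) (r : seq I) (F : I -> T -> E) :
  (forall i, continuous (F i)) -> continuous (fun x => \sum_(i <- r) F i x).
Proof.
move=> Fc; elim: r => [|a r IH] x.
  under eq_fun do rewrite big_nil; exact: cst_continuous.
under eq_fun do rewrite big_cons.
by apply: continuousD; [exact: Fc|exact: IH].
Qed.

Definition spanS (e : nat -> E) (n : nat) (x : E) :=
  exists c : nat -> R, x = \sum_(i < n) c i *: e i.

Definition gmap (e : nat -> E) n (c : 'rV[R]_n) : E :=
  \sum_(i < n) c ord0 i *: e i.

Lemma gmap_cont e n : continuous (@gmap e n).
Proof.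
apply: cont_sum => i c; apply: continuousZr_tmp.
exact: coord_continuous.
Qed.

Lemma span_compact n (e : nat -> E) (K : R) (l : nat -> E -> R) : 0 <= K ->
  (forall x, spanS e n x ->
    x = \sum_(i < n) l i x *: e i /\ (forall i, `|l i x| <= K * `|x|)) ->
  forall (B : set E) (M : R), B `<=` spanS e n -> (forall x, B x -> `|x| <= M) ->
  closed B -> compact B.
Proof.
move=> K0 Hl B M BS BM Bc.
set C := [set c : 'rV[R]_n | forall i, `[- (K * M), K * M]%classic (c ord0 i)].
have Cc : compact C.
  by apply: (@rV_compact _ _ (fun=> `[- (K * M), K * M]%classic)) => _; exact: segment_compact.
have -> : B = gmap e (n:=n) @` (C `&` gmap e (n:=n) @^-1` B).
  apply/seteqP; split => [x Bx|_ [c [_ Bc'] <-] //].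
  have [xe xb] := Hl x (BS x Bx).
  exists (\row_(i < n) l i x).
    split; last first.
      rewrite /= /gmap; suff -> : \sum_(i < n) (\row_(i0 < n) l i0 x) ord0 i *: e i = x by [].
      by rewrite [RHS]xe; apply: eq_bigr => i _; rewrite mxE.
    move=> i; rewrite mxE /= in_itv /=; rewrite -ler_norml.
    apply: le_trans (xb i) _.
    by rewrite ler_wpM2l // BM.
  rewrite /gmap; rewrite [RHS]xe; apply: eq_bigr => i _; rewrite mxE //.
apply: continuous_compact.
  by apply: continuous_subspaceT; exact: gmap_cont.
apply: compact_closedI => //.
apply: preimage_closed => //.
by move=> x _; exact: gmap_cont.
Qed.


Lemma span_closed n (e : nat -> E) (K : R) (l : nat -> E -> R) : 0 <= K ->
  (forall x, spanS e n x ->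
    x = \sum_(i < n) l i x *: e i /\ (forall i, `|l i x| <= K * `|x|)) ->
  closed (spanS e n).
Proof.
move=> K0 Hl; apply: closedP' => p Hp.
set rho := K * (`|p| + 1).
set C := [set c : 'rV[R]_n | forall i, `[- rho, rho]%classic (c ord0 i)].
have Cc : compact C.
  by apply: (@rV_compact _ _ (fun=> `[- rho, rho]%classic)) => _; exact: segment_compact.
have Ic : closed (gmap e (n:=n) @` C).
  apply: compact_closed; first exact: norm_hausdorff.
  apply: continuous_compact => //.
  by apply: continuous_subspaceT; exact: gmap_cont.
suff : (gmap e (n:=n) @` C) p.
  by move=> [c _ <-]; exists (fun i => if (insub i : option 'I_n) is Some j then c ord0 j else 0);
     rewrite /gmap; apply: eq_bigr => i _; rewrite valK.
apply: Ic; apply/closureP' => eps eps0.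
have m0 : 0 < Num.min eps 1 by rewrite lt_min eps0 ltr01.
have [a [Sa pa]] := Hp _ m0.
have [ae ab] := Hl a Sa.
exists a; split; last by apply: lt_le_trans pa _; rewrite ge_min lexx.
exists (\row_(i < n) l i a); last first.
  by rewrite /gmap [RHS]ae; apply: eq_bigr => i _; rewrite mxE.
move=> i; rewrite mxE /= in_itv /= -ler_norml.
apply: le_trans (ab i) _; rewrite ler_wpM2l //.
have : `|p - a| <= 1 by apply: ltW; apply: lt_le_trans pa _; rewrite ge_min lexx orbT.
move=> h.
have -> : a = p - (p - a) by rewrite opprB addrC subrK.
apply: le_trans (ler_normB _ _) _; rewrite lerD2l //.
Qed.


Lemma span_lin e n x y (a : R) : spanS e n x -> spanS e n y -> spanS e n (a *: x + y).
Proof.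
move=> [c ->] [d ->]; exists (fun i => a * c i + d i).
rewrite scaler_sumr -big_split; apply: eq_bigr => i _.
by rewrite scalerDl scalerA.
Qed.

Lemma span0 e n : spanS e n 0.
Proof. by exists (fun=> 0); rewrite big1 // => i _; rewrite scale0r. Qed.

Lemma span_succ e n x : spanS e n.+1 x <->
  exists s (lam : R), spanS e n s /\ x = s + lam *: e n.
Proof.
split => [[c ->]|[s [lam [[c ->] ->]]]].
  rewrite big_ord_recr /=; exists (\sum_(i < n) c i *: e i), (c n).
  by split => //; exists c.
exists (fun i => if i == n then lam else c i).
rewrite big_ord_recr /= eqxx; congr (_ + _).
by apply: eq_bigr => i _; rewrite /= (ltn_eqF (ltn_ord i)).
Qed.

Lemma span_mono e n x : spanS e n x -> spanS e n.+1 x.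
Proof. by move=> Sx; apply/span_succ; exists x, 0; rewrite scale0r addr0. Qed.


Lemma span_scale e n x (a : R) : spanS e n x -> spanS e n (a *: x).
Proof. by move=> Sx; rewrite -[_ *: _]addr0; apply: span_lin => //; exact: span0. Qed.

Lemma span_add e n x y : spanS e n x -> spanS e n y -> spanS e n (x + y).
Proof. by move=> Sx Sy; rewrite -[x]scale1r; apply: span_lin. Qed.

Lemma span_sub e n x y : spanS e n x -> spanS e n y -> spanS e n (x - y).
Proof. by move=> Sx Sy; rewrite -scaleN1r; apply: span_add => //; exact: span_scale. Qed.

Definition coord_prop e n (K : R) (l : nat -> E -> R) := 0 <= K /\ forall x, spanS e n x ->
  (x = \sum_(i < n) l i x *: e i /\ (forall i, `|l i x| <= K * `|x|)) /\
  (forall y (a : R), spanS e n y -> forall i, l i (a *: x + y) = a * l i x + l i y).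

Lemma coord_exists e n : exists K l, coord_prop e n K l.
Proof.
elim: n => [|n [K [l [K0 Hl]]]].
  exists 0, (fun _ _ => 0); split => // x [c ->]; rewrite !big_ord0; split.
    by split => // i; rewrite normr0 mul0r.
  by move=> y a _ i; rewrite mulr0 addr0.
have Hl1 : forall x, spanS e n x ->
    x = \sum_(i < n) l i x *: e i /\ (forall i, `|l i x| <= K * `|x|).
  by move=> x /Hl [].
have Cl := span_closed K0 Hl1.
have [Sen|Sen] := pselect (spanS e n (e n)).
  have down : forall x, spanS e n.+1 x -> spanS e n x.
    move=> x /span_succ [s [lam [Ss ->]]].
    by rewrite addrC; apply: span_lin.
  exists K, (fun i x => if i == n then 0 else l i x); split => // x /down Sx.
  have [[xe xb] xl] := Hl x Sx.
  split; [split|].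
  + rewrite big_ord_recr /= eqxx scale0r addr0 {1}xe.
    by apply: eq_bigr => i _; rewrite /= (ltn_eqF (ltn_ord i)).
  + by move=> i; case: eqP => _; [rewrite normr0 mulr_ge0|].
  + move=> y a /down Sy i.
    by case: eqP => _; [rewrite mulr0 addr0|exact: xl].
have [r r0 Hr] : exists2 r : R, 0 < r & forall s, spanS e n s -> r <= `|e n - s|.
  apply: contrapT => H; apply: Sen; apply: Cl; apply/closureP' => eps eps0.
  apply: contrapT => H2; apply: H; exists eps => // s Ss.
  rewrite leNgt; apply/negP => h; apply: H2; exists s; split => //.
have uniq : forall s s' (lam lam' : R), spanS e n s -> spanS e n s' ->
    s + lam *: e n = s' + lam' *: e n -> lam = lam'.
  move=> s s' lam lam' Ss Ss' H; apply: contrapT => /eqP ne; apply: Sen.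
  have H2 : (lam - lam') *: e n = s' - s.
    by rewrite scalerBl; apply/eqP; rewrite subr_eq addrAC -H [s + _]addrC addrK.
  have -> : e n = (lam - lam')^-1 *: (s' - s).
    by rewrite -H2 scalerA mulVf ?scale1r // subr_eq0.
  by apply: span_scale; apply: span_sub.
set lam := fun x => xget 0 [set t : R | exists s, spanS e n s /\ x = s + t *: e n].
have lamS : forall x, spanS e n.+1 x ->
    exists s', spanS e n s' /\ x = s' + lam x *: e n.
  by move=> x /span_succ [s [t [Ss xe]]]; apply: (xgetPex 0
    (P := [set t : R | exists s, spanS e n s /\ x = s + t *: e n])); exists t, s.
have lamP : forall x, spanS e n.+1 x -> spanS e n (x - lam x *: e n).
  by move=> x /lamS [s' [Ss' xe']]; rewrite {1}xe' addrK.
have lamE : forall x s t, spanS e n s -> x = s + t *: e n -> lam x = t.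
  move=> x s t Ss xe.
  have [s' [Ss' xe']] : exists s', spanS e n s' /\ x = s' + lam x *: e n.
    by apply: lamS; apply/span_succ; exists s, t.
  by apply: (uniq s' s) => //; rewrite -xe' -xe.
have en0 := normr_ge0 (e n).
have Kp : 0 <= K * (1 + `|e n| / r) by rewrite mulr_ge0 // addr_ge0 // divr_ge0 // ltW.
exists (1 / r + K * (1 + `|e n| / r)),
  (fun i x => if i == n then lam x else l i (x - lam x *: e n)).
split; first by rewrite addr_ge0 // divr_ge0 // ltW.
move=> x Sx; have Sxs := lamP x Sx; have [[se sb] sl] := Hl _ Sxs.
have lamb : `|lam x| <= `|x| / r.
  have [->|l0] := eqVneq (lam x) 0; first by rewrite normr0 divr_ge0 // ltW.
  have h := Hr _ (span_scale (- (lam x)^-1) Sxs).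
  have e1 : x = lam x *: (e n - (- (lam x)^-1) *: (x - lam x *: e n)).
    by rewrite scaleNr opprK scalerDr scalerA mulfV // scale1r addrC subrK.
  rewrite ler_pdivlMr // {2}e1 normrZ mulrC.
  by rewrite [r * _]mulrC; apply: ler_wpM2l.
have sbd : `|x - lam x *: e n| <= `|x| + `|lam x| * `|e n|.
  by rewrite -normrZ; apply: ler_normB.
split; [split|].
- rewrite big_ord_recr /= eqxx.
  rewrite (eq_bigr (fun i : 'I_n => l i (x - lam x *: e n) *: e i)); last first.
    by move=> i _; rewrite /= (ltn_eqF (ltn_ord i)).
  by rewrite -se subrK.
- move=> i; case: eqP => _.
    apply: le_trans lamb _; rewrite mulrDl mul1r [r^-1 * _]mulrC lerDl; exact: mulr_ge0.
  apply: le_trans (sb i) _.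
  have h1 : K * `|x - lam x *: e n| <= K * (`|x| + `|x| / r * `|e n|).
    rewrite ler_wpM2l //; apply: le_trans sbd _; rewrite lerD2l ler_wpM2r //.
  apply: le_trans h1 _; rewrite mulrDl; apply: ler_wpDl.
    by rewrite mulr_ge0 // divr_ge0 // ltW.
  rewrite le_eqVlt; apply/orP; left; apply/eqP; field; rewrite gt_eqF //.
- move=> y a Sy i.
  have Sys := lamP y Sy.
  have idt : a *: x + y = (a *: (x - lam x *: e n) + (y - lam y *: e n)) +
                          (a * lam x + lam y) *: e n.
    rewrite scalerDl -scalerA scalerBr addrACA. by rewrite !subrK.
  have lE : lam (a *: x + y) = a * lam x + lam y.
    by apply: (lamE _ _ _ _ idt); apply: span_lin.
  case: eqP => _; first by [].
  rewrite lE {1}idt addrK; exact: sl.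
Qed.

End S.


Section Sub.
Context {R : realType} {E : normedModType R} (A : set E) (HA : lin_subspace A).

Lemma sub_scale a x : A x -> A (a *: x).
Proof. by case: HA => _ [_ H]; apply: H. Qed.
Lemma sub_add x y : A x -> A y -> A (x + y).
Proof. by case: HA => _ [H _]; apply: H. Qed.
Lemma sub0 : A 0.
Proof. by case: HA. Qed.
Lemma sub_opp x : A x -> A (- x).
Proof. by move=> Ax; rewrite -scaleN1r; apply: sub_scale. Qed.
Lemma sub_sub x y : A x -> A y -> A (x - y).
Proof. by move=> Ax Ay; apply: sub_add => //; apply: sub_opp. Qed.

End Sub.

Section Clos.
Context {R : realType} {E : normedModType R}.

Lemma closure_meet0 (A B : set E) (f : E -> R) : continuous f ->
  lin_subspace A -> lin_subspace B ->
  (forall M, exists r, forall a, A a -> r < `|a| -> M < f a) ->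
  (forall M, exists r, forall b, B b -> r < `|b| -> f b < M) ->
  forall b, closure A b -> B b -> b = 0.
Proof.
move=> fc HA HB HfA HfB b clb Bb; apply: contrapT => /eqP b0.
have nb0 : 0 < `|b| by rewrite normr_gt0.
have [r1 H1] := HfA 0; have [r2 H2] := HfB 0.
set r := Num.max (Num.max r1 r2) 0 + 1.
have r0 : 0 < r by rewrite /r ltr_wpDl // le_max lexx orbT.
have m0 : 0 <= Num.max (Num.max r1 r2) 0 by rewrite le_max lexx orbT.
have m1 : r1 <= Num.max (Num.max r1 r2) 0 by rewrite !le_max lexx.
have m2 : r2 <= Num.max (Num.max r1 r2) 0 by rewrite !le_max lexx orbT.
have rpos : 0 < r by rewrite /r; lra.
have rr1 : r1 < r by rewrite /r; lra.
have rr2 : r2 < r by rewrite /r; lra.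
set lam := (r + 1) / `|b|.
have lam0 : 0 < lam by rewrite /lam divr_gt0 // addr_gt0.
set b' := lam *: b.
have nb' : `|b'| = r + 1 by rewrite /b' normrZ gtr0_norm // /lam mulfVK // gt_eqF.
have fb' : f b' < 0 by apply: H2; [exact: sub_scale|rewrite nb' ltr_wpDr].
have := fc b'; move/cvgrPdist_lt => /(_ (- f b')); rewrite oppr_gt0 => /(_ fb').
move=> /nbhsE' [d d0 Hd].
have e0 : 0 < Num.min d 1 / lam by rewrite divr_gt0 // lt_min d0 ltr01.
have [a [Aa ba]] := (closureP' A b).1 clb _ e0.
have Aa' : A (lam *: a) by exact: sub_scale.
have da : `|b' - lam *: a| < Num.min d 1.
  by rewrite /b' -scalerBr normrZ gtr0_norm // mulrC -ltr_pdivlMr.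
have md : Num.min d 1 <= d by rewrite ge_min lexx.
have md1 : Num.min d 1 <= 1 by rewrite ge_min lexx orbT.
have fa' := Hd _ (lt_le_trans da md).
have : r1 < `|lam *: a|.
  apply: lt_trans rr1 _.
  have h1 : `|b'| <= `|b' - lam *: a| + `|lam *: a|.
    by rewrite -[X in `|X|](subrK (lam *: a)) ler_normD.
  have h2 : `|b' - lam *: a| < 1 := lt_le_trans da md1.
  move: h1 h2; rewrite nb'; lra.
move=> /(H1 _ Aa') fa.
have := ler_norm (f (lam *: a) - f b'); rewrite distrC; move: fa' fa fb'; lra.
Qed.

End Clos.

Section Main.
Context {R : realType} {E : normedModType R} (V W : set E) (Phi : E -> R).
Context (Refl : @reflexive_space R E) (HV : lin_subspace V) (HW : lin_subspace W)
  (DS : direct_sum V W) (FD : finite_dim V) (LL : locally_lipschitz Phi).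
Context (Hi : forall M : R, exists r : R, forall w, W w -> r < `|w| -> M < Phi w).
Context (Hqc : forall w, W w -> strictly_quasi_concave_on V (fun v => Phi (v + w))).
Context (Hiii : forall rho M : R, exists r : R, forall v w, V v -> W w -> `|w| <= rho ->
       r < `|v| -> Phi (v + w) < M).
Context (Hiv : forall v, V v -> weakly_lsc_on W (fun w => Phi (v + w))).

Let PhiC : continuous Phi := ll_cont LL.

Definition dec x := xget (0, 0) [set p : E * E | V p.1 /\ W p.2 /\ x = p.1 + p.2].

Lemma decP x : V (dec x).1 /\ W (dec x).2 /\ x = (dec x).1 + (dec x).2.
Proof.
have [p [Pp _]] := DS x.
exact: (xgetPex (0, 0) (P := [set p : E * E | V p.1 /\ W p.2 /\ x = p.1 + p.2])
  (ex_intro _ p Pp)).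
Qed.

Lemma dec_uniq x v w : V v -> W w -> x = v + w -> dec x = (v, w).
Proof.
move=> Vv Ww xe; have [p [Pp Hp]] := DS x.
have e1 := Hp (v, w) (conj Vv (conj Ww xe)).
have e2 := Hp _ (decP x).
by rewrite -e1 -e2.
Qed.

Lemma VW0 x : V x -> W x -> x = 0.
Proof.
move=> Vx Wx.
have h1 := @dec_uniq x x 0 Vx (sub0 HW) (esym (addr0 x)).
have h2 := @dec_uniq x 0 x (sub0 HV) Wx (esym (add0r x)).
by rewrite h1 in h2; case: h2.
Qed.

Lemma V_large_neg : forall M : R, exists r : R, forall v, V v -> r < `|v| -> Phi v < M.
Proof.
move=> M; have [r Hr] := Hiii 0 M; exists r => v Vv rv.
by have := Hr v 0 Vv (sub0 HW); rewrite normr0 addr0 => /(_ (lexx _) rv).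
Qed.

Lemma closure_shift (A : set E) (HA : lin_subspace A) x a :
  closure A x -> A a -> closure A (x - a).
Proof.
move=> /closureP' cx Aa; apply/closureP' => eps eps0.
have [b [Ab hb]] := cx eps eps0; exists (b - a); split; first exact: sub_sub.
by rewrite opprB addrA subrK.
Qed.

Lemma W_closed : closed W.
Proof.
move=> x clx; have [Vv [Ww xe]] := decP x.
have clv : closure W (dec x).1.
  by have := closure_shift HW clx Ww; rewrite {1}xe addrK.
have v0 := closure_meet0 PhiC HW HV Hi V_large_neg clv Vv.
by rewrite xe v0 add0r.
Qed.

Lemma V_closed : closed V.
Proof.
move=> x clx; have [Vv [Ww xe]] := decP x.
have clw : closure V (dec x).2.
  by have := closure_shift HV clx Vv; rewrite {1}xe addrC addKr.
have Nc : continuous (fun y => - Phi y).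
  by move=> y; apply: cvgN; exact: PhiC.
have w0 := closure_meet0 Nc HV HW _ _ clw Ww.
rewrite xe w0 ?addr0 //.
- move=> M; have [r Hr] := V_large_neg (- M); exists r => v Vv' rv.
  by rewrite ltrNr; apply: Hr.
- move=> M; have [r Hr] := Hi (- M); exists r => w Ww' rw.
  by rewrite ltrNl; apply: Hr.
Qed.


Lemma V_span : exists n (en : nat -> E), V `<=` spanS en n.
Proof.
have [n [e He]] := FD.
exists n, (fun k => if (insub k : option 'I_n) is Some i then e i else 0).
move=> x /He [c ->].
exists (fun k => if (insub k : option 'I_n) is Some i then c i else 0).
by apply: eq_bigr => i _; rewrite valK.
Qed.

Lemma V_coord : exists n en K l, V `<=` spanS en n /\ coord_prop en n K l.
Proof.
have [n [en Hs]] := V_span; have [K [l Hc]] := coord_exists en n.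
by exists n, en, K, l.
Qed.

Lemma V_compact (B : set E) (M : R) : B `<=` V -> (forall x, B x -> `|x| <= M) ->
  closed B -> compact B.
Proof.
move=> BV BM Bc; have [n [en [K [l [Hs [K0 Hc]]]]]] := V_coord.
apply: (@span_compact _ _ n en K l K0 _ B M) => //.
  by move=> x /Hc [].
by move=> x /BV /Hs.
Qed.

Lemma P_bound : exists KP : R, 0 < KP /\ forall x, `|(dec x).1| <= KP * `|x|.
Proof.
set S := [set v | V v /\ `|v| = 1].
have Sc : compact S.
  apply: (@V_compact _ 1); first by move=> v [].
    by move=> v [_ ->].
  apply: closedI; first exact: V_closed.
  change (closed ((@Num.norm R E) @^-1` [set x : R | x = 1])).
  apply: preimage_closed; last exact: closed_eq.
  by move=> x _; exact: norm_continuous.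
have [d d0 Hd] : exists2 d : R, 0 < d & forall v w, S v -> W w -> d <= `|v - w|.
  apply: contrapT => H.
  have H' : forall d : R, 0 < d -> exists v, S v /\ exists w, W w /\ `|v - w| < d.
    move=> d d0; apply: contrapT => H2; apply: H; exists d => // v w Sv Ww.
    by rewrite leNgt; apply/negP => h; apply: H2; exists v; split => //; exists w.
  set F := filter_from [set d : R | 0 < d]
    (fun d => [set v | S v /\ exists w, W w /\ `|v - w| < d]).
  have FF : ProperFilter F.
    apply: filter_from_proper; last by move=> i /H' [v Hv]; exists v.
    apply: filter_from_filter; first by exists 1; exact: ltr01.
    move=> i j i0 j0; exists (Num.min i j); first by rewrite /= lt_min i0 j0.
    move=> v [Sv [w [Ww vw]]]; split; split => //; exists w; split => //;
      apply: lt_le_trans vw _; rewrite ge_min lexx ?orbT //.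
  have FS : F S by exists 1; [exact: ltr01|move=> v []].
  have [vs [Svs clvs]] := Sc F FF FS.
  have : W vs.
    apply: W_closed; apply/closureP' => eps eps0.
    have e2 : 0 < eps / 2 by rewrite divr_gt0.
    have FB : F [set v | S v /\ exists w, W w /\ `|v - w| < eps / 2] by exists (eps / 2).
    have [v [[Sv [w [Ww vw]]] bv]] := clvs _ _ FB (nbhsx_ballx vs _ e2).
    exists w; split => //.
    rewrite -ball_normE /= in bv.
    have := ler_normD (vs - v) (v - w); rewrite addrA subrK.
    move: bv vw; lra.
  move=> Wvs; have := VW0 Svs.1 Wvs => vs0.
  by have := Svs.2; rewrite vs0 normr0 => /eqP; rewrite eq_sym oner_eq0.
exists (1 / d); split; first by rewrite divr_gt0.
move=> x; have [Vv [Ww xe]] := decP x.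
set v := (dec x).1; set w := (dec x).2.
have [->|v0] := eqVneq v 0; first by rewrite normr0 mulr_ge0 // divr_ge0 // ltW.
have nv0 : 0 < `|v| by rewrite normr_gt0.
have Su : S (`|v|^-1 *: v).
  split; first exact: sub_scale.
  by rewrite normrZ normfV normr_id mulVf // gt_eqF.
have := Hd _ (- (`|v|^-1 *: w)) Su (sub_opp HW (sub_scale HW _ Ww)).
rewrite opprK -scalerDr -xe normrZ normfV normr_id.
move=> h; have := ler_wpM2l (ltW nv0) h.
rewrite mulrA mulfV ?gt_eqF // mul1r => h2.
by rewrite mulrC ler_pdivlMr // -[`|x|]mul1r.
Qed.


Lemma decD x y : (dec (x + y)).1 = (dec x).1 + (dec y).1.
Proof.
have [Vx [Wx xe]] := decP x; have [Vy [Wy ye]] := decP y.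
rewrite (@dec_uniq (x + y) ((dec x).1 + (dec y).1) ((dec x).2 + (dec y).2)) //.
- exact: sub_add.
- exact: sub_add.
by rewrite {1}xe {1}ye addrACA.
Qed.

Lemma decZ (a : R) x : (dec (a *: x)).1 = a *: (dec x).1.
Proof.
have [Vx [Wx xe]] := decP x.
rewrite (@dec_uniq (a *: x) (a *: (dec x).1) (a *: (dec x).2)) //.
- exact: sub_scale.
- exact: sub_scale.
by rewrite {1}xe scalerDr.
Qed.

Lemma decW w : W w -> (dec w).1 = 0.
Proof.
by move=> Ww; rewrite (@dec_uniq w 0 w) // ?add0r //; exact: sub0.
Qed.

Lemma W_char : exists phi : nat -> E -> R,
  (forall i, dual_elt (phi i)) /\ (forall i w, W w -> phi i w = 0) /\
  (forall x, (forall i, phi i x = 0) -> W x).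
Proof.
have [n [en [K [l [Hs [K0 Hc]]]]]] := V_coord.
have [KP [KP0 HKP]] := P_bound.
have l0 : forall i, l i 0 = 0.
  move=> i; have [_ h] := Hc 0 (span0 en n).
  have := h 0 1 (span0 en n) i; rewrite scale1r addr0 mul1r.
  by move=> h2; lra.
have lD : forall i x y, spanS en n x -> spanS en n y -> l i (x + y) = l i x + l i y.
  move=> i x y Sx Sy; have [_ h] := Hc x Sx.
  by have := h y 1 Sy i; rewrite scale1r mul1r.
have lZ : forall i (a : R) x, spanS en n x -> l i (a *: x) = a * l i x.
  move=> i a x Sx; have [_ h] := Hc x Sx.
  by have := h 0 a (span0 en n) i; rewrite !addr0 l0 addr0.
have SV : forall x, spanS en n (dec x).1 by move=> x; apply: Hs; case: (decP x).
exists (fun i x => l i (dec x).1); split; last split.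
- move=> i; split; last split.
  + by move=> x y; rewrite decD lD.
  + by move=> a x; rewrite decZ lZ.
  apply: bounded_lin_cont.
  + by move=> x y; rewrite decD lD.
  + by move=> a x; rewrite decZ lZ.
  exists (K * KP) => x; have [[_ hb] _] := Hc _ (SV x).
  apply: le_trans (hb i) _; rewrite -mulrA ler_wpM2l //.
- by move=> i w Ww; rewrite decW.
move=> x H; have [Vx [Wx xe]] := decP x.
have [[he _] _] := Hc _ (SV x).
have : (dec x).1 = 0 by rewrite he big1 // => i _; rewrite H scale0r.
by move=> v0; rewrite xe v0 add0r.
Qed.


Lemma Phi_shift_cont w : continuous (fun v => Phi (v + w)).
Proof.
move=> x; apply: (@continuous_comp _ _ _ (fun v => v + w) Phi); last exact: PhiC.
by apply: cvgD; [exact: cvg_id|exact: cvg_cst].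
Qed.

Lemma closed_normle (r : R) : closed [set v : E | `|v| <= r].
Proof.
change (closed ((@Num.norm R E) @^-1` [set x : R | x <= r])).
apply: preimage_closed; last exact: closed_le.
by move=> x _; exact: norm_continuous.
Qed.

Lemma max_exists w : W w -> exists s, V s /\ forall v, V v -> Phi (v + w) <= Phi (s + w).
Proof.
move=> Ww; have [r Hr] := Hiii `|w| (Phi (0 + w)).
set r' := Num.max r 0.
set B := [set v | V v /\ `|v| <= r'].
have Bc : compact B.
  apply: (@V_compact _ r'); first by move=> v [].
    by move=> v [].
  by apply: closedI; [exact: V_closed|exact: closed_normle].
have B0 : B 0 by split; [exact: sub0|rewrite normr0 le_max lexx orbT].
have [c cB Hc] := compact_EVT_max (ex_intro _ 0 B0) Bc
  (continuous_subspaceT (@Phi_shift_cont w)).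
move/set_mem: cB => [Vc cr]; exists c; split => // v Vv.
have [vr|vr] := leP `|v| r'; first by apply: Hc; apply/mem_set.
apply: ltW; apply: lt_le_trans (Hc 0 (mem_set B0)).
apply: Hr => //; apply: le_lt_trans vr; rewrite le_max lexx //.
Qed.

Lemma max_uniq w s1 s2 : W w -> V s1 -> V s2 ->
  (forall v, V v -> Phi (v + w) <= Phi (s1 + w)) ->
  (forall v, V v -> Phi (v + w) <= Phi (s2 + w)) -> s1 = s2.
Proof.
move=> Ww V1 V2 H1 H2; apply: contrapT => ne.
have h : 0 < 1 / 2 :> R by rewrite divr_gt0.
have h' : 1 / 2 < 1 :> R by rewrite ltr_pdivrMr // mul1r ltr1n.
have := Hqc Ww V1 V2 ne h h'.
have e : Phi (s2 + w) = Phi (s1 + w) by apply/le_anti; rewrite H1 // H2.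
rewrite /= e minxx.
have Vm : V (1 / 2 *: s1 + (1 - 1 / 2) *: s2).
  by apply: (sub_add HV); apply: (sub_scale HV).
by move=> /lt_le_trans /(_ (H1 _ Vm)); rewrite ltxx.
Qed.

Definition Smax w := xget 0 [set s | V s /\ forall v, V v -> Phi (v + w) <= Phi (s + w)].

Lemma SmaxP w : W w -> V (Smax w) /\ forall v, V v -> Phi (v + w) <= Phi (Smax w + w).
Proof.
by move=> Ww; apply: (xgetPex 0
  (P := [set s | V s /\ forall v, V v -> Phi (v + w) <= Phi (s + w)])); apply: max_exists.
Qed.

Definition mval w := Phi (Smax w + w).


Lemma closed_normleR (r : R) : closed [set v : R | `|v| <= r].
Proof.
change (closed ((@Num.norm R R) @^-1` [set x : R | x <= r])).
apply: preimage_closed; last exact: closed_le.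
by move=> x _; exact: norm_continuous.
Qed.

Lemma minimizer : exists x0, W x0 /\ forall w, W w -> mval x0 <= mval w.
Proof.
have W0 : W 0 := sub0 HW.
set c0 := mval 0.
have [r0 Hr0] := Hi c0.
set r0' := Num.max r0 0.
have r0'0 : 0 <= r0' by rewrite le_max lexx orbT.
have r0r : r0 <= r0' by rewrite le_max lexx.
have mge : forall w, W w -> Phi w <= mval w.
  by move=> w Ww; have [V0 H0] := SmaxP Ww; have := H0 0 (sub0 HV); rewrite add0r.
have bnd : forall w, W w -> mval w <= c0 -> `|w| <= r0'.
  move=> w Ww hw; rewrite leNgt; apply/negP => hr.
  have r0w : r0 < `|w| by apply: le_lt_trans hr.
  have := Hr0 w Ww r0w.
  by move=> h; have := le_lt_trans hw (lt_le_trans h (mge w Ww)); rewrite ltxx.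
set D := [set c : R | c <= c0 /\ exists w, W w /\ mval w <= c].
set B := fun c => [set w | W w /\ mval w <= c].
set F := filter_from D B.
have FF : ProperFilter F.
  apply: filter_from_proper; last by move=> c [_ [w Hw]]; exists w.
  apply: filter_from_filter; first by exists c0; split => //; exists 0.
  move=> i j [i0 [wi [Wwi hi]]] [j0 [wj [Wwj hj]]].
  exists (Num.min i j).
    split; first by rewrite ge_min i0.
    have [ij|ij] := leP i j.
      by exists wi; split => //; rewrite min_l.
    by exists wj; split => //; rewrite min_r // ltW.
  move=> w [Ww hw]; split; split => //; apply: le_trans hw _; rewrite ge_min lexx //.
  by rewrite orbT.
have [G [GU FG]] := ultraFilterLemma FF.
have GP : ProperFilter G by case: GU.
have GB : forall c, D c -> G (B c) by move=> c Dc; apply: FG; exists c.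
have Dc0 : D c0 by split => //; exists 0.
set Lf := fun f : E -> R => lim (f @ G).
have Lcvg : forall f, dual_elt f -> f @ G --> Lf f.
  move=> f df; have [C [C0 HC]] := dual_bounded df.
  set I := `[- (C * r0'), C * r0']%classic.
  have GI : (f @ G) I.
    apply: (@filterS _ _ _ (B c0)); last exact: GB. move=> w [Ww hw].
    change (f w \in `[- (C * r0'), C * r0']); rewrite in_itv /= -ler_norml; apply: le_trans (HC w) _.
    by rewrite ler_wpM2l ?(ltW C0) // bnd.
  have [p [Ip clp]] := @segment_compact _ (- (C * r0')) (C * r0') (f @ G) _ GI.
  suff fp : f @ G --> p by rewrite /Lf (cvg_lim _ fp).
  move=> N Np; case: (in_ultra_setVsetC (f @^-1` N) GU) => // Gc.
  by have [y [ny Ny]] := clp (~` N) N Gc Np.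
have [x0 Hx0] : exists x0 : E, forall f, dual_elt f -> Lf f = f x0.
  apply: Refl.
  - move=> f g df dg; exact: (cvg_lim _ (cvgD (Lcvg f df) (Lcvg g dg))).
  - move=> a f df; exact: (cvg_lim _ (@cvgMl_tmp _ _ _ _ f a _ (Lcvg f df))).
  - exists r0' => f df M M0 HM.
    have h := @closed_cvg _ _ G _ f _ (@closed_normleR (r0' * M)).
    apply: (h GP _ _ (Lcvg f df)).
    apply: (@filterS _ _ _ (B c0)); last exact: GB.
    move=> w [Ww hw] /=; apply: le_trans (HM w) _.
    by rewrite mulrC ler_wpM2r // bnd.
have Wx0 : W x0.
  have [phi [dphi [phiW phiC]]] := W_char.
  apply: phiC => i; rewrite -Hx0 //.
  have h := @closed_cvg _ _ G _ (phi i) _ (@closed_eq _ 0).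
  apply: (h GP _ _ (Lcvg _ (dphi i))).
  apply: (@filterS _ _ _ (B c0)); last exact: GB.
  by move=> w [Ww _] /=; apply: phiW.
have clus : forall c, D c -> forall n (fs : 'I_n -> E -> R) (eps : R),
    (forall i, dual_elt (fs i)) -> 0 < eps ->
    exists w, B c w /\ forall i, `|fs i (w - x0)| < eps.
  move=> c Dc n fs eps dfs eps0.
  have Gi : forall i, \forall w \near G, `|fs i x0 - fs i w| < eps.
    by move=> i; rewrite -Hx0 //; apply: cvgr_dist_lt => //; exact: Lcvg.
  have Gall : \forall w \near G, forall i, `|fs i x0 - fs i w| < eps by apply: filter_forall.
  have [w [Bw Hw]] := filter_ex (filterI (GB c Dc) Gall).
  exists w; split => // i; have [fa [fh _]] := dfs i.
  by rewrite lin_sub // distrC.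
have mx0 : forall c, D c -> mval x0 <= c.
  move=> c Dc; rewrite leNgt; apply/negP => cx.
  have [Vs Hs] := SmaxP Wx0.
  have [n [fs [eps [dfs [eps0 H]]]]] := Hiv Vs Wx0 cx.
  have [w [[Ww hw] Hw]] := clus c Dc n fs eps dfs eps0.
  have := H w Ww Hw; have [_ Hsw] := SmaxP Ww.
  move=> h; have := lt_le_trans h (Hsw _ Vs).
  by move=> h2; have := lt_le_trans h2 hw; rewrite ltxx.
exists x0; split => // w Ww.
have [wc|wc] := leP (mval w) c0.
  by apply: mx0; split => //; exists w.
by apply: le_trans (mx0 _ Dc0) (ltW wc).
Qed.


Lemma U2 x0 dw : W x0 -> W dw -> (forall w, W w -> mval x0 <= mval w) ->
  forall delta eta : R, 0 < delta -> 0 < eta ->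
  exists t : R, 0 < t /\ t < eta /\ `|Smax (x0 + t *: dw) - Smax x0| < delta.
Proof.
move=> Wx0 Wdw Hmin delta eta d0 e0; apply: contrapT => Hn.
have H : forall t : R, 0 < t -> t < eta -> delta <= `|Smax (x0 + t *: dw) - Smax x0|.
  move=> t t0 te; rewrite leNgt; apply/negP => h; apply: Hn; exists t; split => //.
set sb := Smax x0.
have [Vsb Hsb] := SmaxP Wx0.
set eta' := Num.min eta 1.
have eta'0 : 0 < eta' by rewrite lt_min e0 ltr01.
have eta'e : eta' <= eta by rewrite ge_min lexx.
have eta'1 : eta' <= 1 by rewrite ge_min lexx orbT.
set st := fun t : R => Smax (x0 + t *: dw).
have Wt : forall t, W (x0 + t *: dw) by move=> t; apply: (sub_add HW) => //; exact: sub_scale.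
have Vst : forall t, V (st t) by move=> t; have [] := SmaxP (Wt t).
have Hst : forall t, Phi (sb + x0) <= Phi (st t + (x0 + t *: dw)) by move=> t; exact: Hmin.
have [r Hr] := Hiii (`|x0| + `|dw|) (Phi (sb + x0)).
set r' := Num.max r 0.
have bst : forall t, 0 < t -> t <= 1 -> `|st t| <= r'.
  move=> t t0 t1; rewrite leNgt; apply/negP => h.
  have rs : r < `|st t| by apply: le_lt_trans h; rewrite le_max lexx.
  have nw : `|x0 + t *: dw| <= `|x0| + `|dw|.
    apply: le_trans (ler_normD _ _) _; rewrite lerD2l normrZ gtr0_norm //.
    by rewrite -[leRHS]mul1r ler_wpM2r.
  have := Hr _ _ (Vst t) (Wt t) nw rs.
  by move=> h2; have := lt_le_trans h2 (Hst t); rewrite ltxx.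
set Bs := fun e : R => [set s | exists t, 0 < t /\ t < e /\ s = st t].
set F := filter_from [set e : R | 0 < e /\ e <= eta'] Bs.
have FF : ProperFilter F.
  apply: filter_from_proper.
    apply: filter_from_filter; first by exists eta'.
    move=> i j [i0 ie] [j0 je]; exists (Num.min i j).
      by split; [rewrite lt_min i0 j0|rewrite ge_min ie].
    move=> s [t [t0 [tij ->]]]; move: tij; rewrite lt_min => /andP[ti tj].
    by split; exists t.
  move=> e [e0' _]; exists (st (e / 2)), (e / 2); split; first by rewrite divr_gt0.
  by split => //; rewrite ltr_pdivrMr // ltr_pMr // ltr1n.
set K := [set s | V s /\ `|s| <= r'].
have Kc : compact K.
  apply: (@V_compact _ r'); first by move=> v [].
    by move=> v [].
  by apply: closedI; [exact: V_closed|exact: closed_normle].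
have FK : F K.
  exists eta' => //; move=> s [t [t0 [te ->]]]; split => //.
  by apply: bst => //; apply: ltW; apply: lt_le_trans te eta'1.
have [ss [[Vss _] clss]] := Kc F FF FK.
have ssd : delta <= `|ss - sb|.
  rewrite leNgt; apply/negP => h.
  have eps0 : 0 < delta - `|ss - sb| by rewrite subr_gt0.
  have FB : F (Bs eta') by exists eta'.
  have [s [[t [t0 [te ->]]] bs]] := clss _ _ FB (nbhsx_ballx ss _ eps0).
  rewrite -ball_normE /= in bs.
  have := H t t0 (lt_le_trans te eta'e).
  have := ler_normD (st t - ss) (ss - sb); rewrite addrA subrK [`|st t - ss|]distrC.
  by move: bs; rewrite /sb /st; lra.
have ssP : Phi (sb + x0) <= Phi (ss + x0).
  rewrite leNgt; apply/negP => h.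
  have := @PhiC (ss + x0); move/cvgrPdist_lt.
  move=> /(_ (Phi (sb + x0) - Phi (ss + x0))); rewrite subr_gt0 => /(_ h).
  move=> /nbhsE' [rho rho0 Hrho].
  have k0 : 0 < 2 * (`|dw| + 1) by rewrite mulr_gt0 // ltr_wpDl.
  set e := Num.min eta' (rho / (2 * (`|dw| + 1))).
  have e0' : 0 < e by rewrite lt_min eta'0 divr_gt0.
  have ee : e <= eta' by rewrite ge_min lexx.
  have er : e <= rho / (2 * (`|dw| + 1)) by rewrite ge_min lexx orbT.
  have FB : F (Bs e) by exists e.
  have r2 : 0 < rho / 2 by rewrite divr_gt0.
  have [s [[t [t0 [te ->]]] bs]] := clss _ _ FB (nbhsx_ballx ss _ r2).
  rewrite -ball_normE /= in bs.
  have tdw : t * `|dw| < rho / 2.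
    have h1 : t * (2 * (`|dw| + 1)) < rho by rewrite -ltr_pdivlMr //; apply: lt_le_trans er.
    have := normr_ge0 dw; move: h1 t0; lra.
  have hz : `|ss + x0 - (st t + (x0 + t *: dw))| < rho.
    have -> : ss + x0 - (st t + (x0 + t *: dw)) = (ss - st t) - t *: dw.
      by rewrite opprD opprD addrACA addNKr.
    apply: le_lt_trans (ler_normB _ _) _.
    by rewrite normrZ gtr0_norm //; move: bs tdw; lra.
  have := Hrho _ hz; have := Hst t.
  have := ler_norm (Phi (st t + (x0 + t *: dw)) - Phi (ss + x0)); rewrite distrC.
  by rewrite /st; lra.
have e := max_uniq Wx0 Vss Vsb (fun v Vv => le_trans (Hsb v Vv) ssP) Hsb.
by move: ssd; rewrite e subrr normr0; lra.
Qed.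


Lemma crit x0 : W x0 -> (forall w, W w -> mval x0 <= mval w) ->
  critical_point Phi (Smax x0 + x0).
Proof.
move=> Wx0 Hmin; set sb := Smax x0; have [Vsb Hsb] := SmaxP Wx0.
split.
  split; first by move=> x y; rewrite addr0.
  split; first by move=> a x; rewrite mulr0.
  by move=> x; exact: cvg_cst.
move=> d; rewrite /clarke_dd.
apply: le_ereal_inf_tmp => _ [del del0 <-].
have [Vdv [Wdw de]] := decP d.
set dv := (dec d).1; set dw := (dec d).2.
have k0 : 0 < 2 * (`|dv| + 1) by rewrite mulr_gt0 // ltr_wpDl.
set eta := Num.min del (del / (2 * (`|dv| + 1))).
have eta0 : 0 < eta by rewrite lt_min del0 divr_gt0.
have etad : eta <= del by rewrite ge_min lexx.
have etak : eta <= del / (2 * (`|dv| + 1)) by rewrite ge_min lexx orbT.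
have d2 : 0 < del / 2 by rewrite divr_gt0.
have [t [t0 [te ts]]] := U2 Wx0 Wdw Hmin d2 eta0.
set s := Smax (x0 + t *: dw).
have Wt : W (x0 + t *: dw) by apply: (sub_add HW) => //; exact: sub_scale.
have [Vs _] := SmaxP Wt.
set y := s - t *: dv + x0.
have tdv : t * `|dv| < del / 2.
  have h1 : t * (2 * (`|dv| + 1)) < del.
    by rewrite -ltr_pdivlMr //; apply: lt_le_trans te etak.
  have := normr_ge0 dv; move: h1 t0; lra.
have Sq : [set q : \bar R | exists (y : E) (t : R),
                  `|y - (sb + x0)| < del /\ 0 < t /\ t < del /\
                  q = ((Phi (y + t *: d) - Phi y) / t)%:E]
          (((Phi (y + t *: d) - Phi y) / t)%:E).
  exists y, t; split; last split => //; last split => //.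
    have -> : y - (sb + x0) = (s - sb) - t *: dv.
      by rewrite /y opprD addrACA addrN addr0 addrAC.
    apply: le_lt_trans (ler_normB _ _) _.
    by rewrite normrZ gtr0_norm //; move: ts tdv; rewrite /s /sb; lra.
  by apply: lt_le_trans te etad.
apply: le_trans (ereal_sup_ubound Sq).
rewrite lee_fin divr_ge0 ?(ltW t0) // subr_ge0.
have -> : y + t *: d = s + (x0 + t *: dw).
  by rewrite /y de scalerDr addrA [s - _ + x0 + _]addrAC subrK -addrA.
have h1 : Phi y <= Phi (sb + x0).
  by apply: Hsb; apply: (sub_sub HV) => //; exact: sub_scale.
apply: le_trans h1 _; exact: (Hmin _ Wt).
Qed.


Lemma main_result :
  (forall w, W w -> exists! s, V s /\ forall v, V v -> Phi (v + w) <= Phi (s + w)) /\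
  exists wb sb : E, W wb /\ V sb /\
    (forall v, V v -> Phi (v + wb) <= Phi (sb + wb)) /\
    (forall w, W w -> exists v, V v /\ Phi (sb + wb) <= Phi (v + w)) /\
    critical_point Phi (sb + wb).
Proof.
split.
  move=> w Ww; have [s [Vs Hs]] := max_exists Ww.
  exists s; split => // s' [Vs' Hs']; exact: max_uniq Ww Vs Vs' Hs Hs'.
have [x0 [Wx0 Hmin]] := minimizer.
have [Vsb Hsb] := SmaxP Wx0.
exists x0, (Smax x0); split => //; split => //; split => //; split.
  move=> w Ww; exists (Smax w); split; first by case: (SmaxP Ww).
  exact: Hmin.
exact: crit.
Qed.

End Main.

Unset Implicit Arguments.

Theorem corollary10 (R : realType) (E : completeNormedModType R)
  (V W : set E) (Phi : E -> R) :
  @reflexive_space R E ->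
  lin_subspace V -> lin_subspace W -> direct_sum V W -> finite_dim V ->
  locally_lipschitz Phi ->
  (* (i) *)
  (forall M : R, exists r : R, forall w, W w -> r < `|w| -> M < Phi w) ->
  (* (ii'') *)
  (forall w, W w -> strictly_quasi_concave_on V (fun v => Phi (v + w))) ->
  (* (iii) *)
  (forall rho M : R, exists r : R, forall v w, V v -> W w -> `|w| <= rho ->
       r < `|v| -> Phi (v + w) < M) ->
  (* (iv) *)
  (forall v, V v -> weakly_lsc_on W (fun w => Phi (v + w))) ->
  (* s(w): unique maximizer of v |-> Phi (v + w) on V *)
  (forall w, W w -> exists! s, V s /\ forall v, V v -> Phi (v + w) <= Phi (s + w)) /\
  exists wb sb : E, W wb /\ V sb /\
    (* sb = s(wb) *)
    (forall v, V v -> Phi (v + wb) <= Phi (sb + wb)) /\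
    (* wb minimizes w |-> max_v Phi (v + w), with value Phi (sb + wb) *)
    (forall w, W w -> exists v, V v /\ Phi (sb + wb) <= Phi (v + w)) /\
    critical_point Phi (sb + wb).
Proof.
move=> Refl HV HW DS FD LL Hi Hqc Hiii Hiv.
exact: (main_result Refl HV HW DS FD LL Hi Hqc Hiii Hiv).
Qed.
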